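(* Let $\mathcal{H}$ be a complex Hilbert space and $T\in\mathbb{B}(\mathcal{H})$. Then $$w(T) \leq \frac{\sqrt{2}}{2}\Omega(T) \leq \frac{\sqrt{2}}{2}\min\left\{\sqrt{\|TT^* + T^*T\|},\ \sqrt{\|T\|^2 + w(T^2)}\right\}.$$
   Context: $\mathbb{B}(\mathcal{H})$ is the algebra of bounded linear operators on $\mathcal{H}$, $\|\cdot\|$ the usual operator norm, and $w(T)=\sup\{|\langle Tx,x\rangle|:\|x\|=1\}$ the numerical radius. Dragomir's norm is $\Omega(T)=\sup\{\|\zeta T+\eta T^*\|:\ \zeta,\eta\in\mathbb{C},\ |\zeta|^2+|\eta|^2\le 1\}$. *)

(* Defs.v *)
From HB Require Import structures.
From mathcomp Require Import all_boot all_order all_algebra.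
From mathcomp Require Import complex.
From mathcomp Require Import boolp classical_sets reals.
Set Implicit Arguments. Unset Strict Implicit. Unset Printing Implicit Defensive.
Import Order.TTheory GRing.Theory Num.Theory.
Local Open Scope ring_scope.
Local Open Scope classical_set_scope.

Section Hilbert.
Variable R : realType.
Variable V : lmodType R[i].
Variable ip : V -> V -> R[i].

Definition hnorm (x : V) : R := Num.sqrt (@complex.Re R (ip x x)).

Record is_hilbert : Prop := IsHilbert {
  ip_linl : forall (a : R[i]) (x y z : V), ip (a *: x + y) z = a * ip x z + ip y z;
  ip_conj : forall x y : V, ip y x = conjc (ip x y);
  ip_ge0 : forall x : V, 0 <= ip x x;
  ip_eq0 : forall x : V, ip x x = 0 -> x = 0;
  ip_complete : forall u : nat -> V,
     (forall e : R, 0 < e -> exists N, forall m n, (N <= m)%N -> (N <= n)%N ->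
        hnorm (u m - u n) < e) ->
     exists l : V, forall e : R, 0 < e -> exists N, forall n, (N <= n)%N ->
        hnorm (u n - l) < e }.

Definition is_bounded_op (T : V -> V) : Prop :=
  (forall (a : R[i]) (x y : V), T (a *: x + y) = a *: T x + T y) /\
  (exists M : R, forall x, hnorm (T x) <= M * hnorm x).

Definition is_adjoint (T Ts : V -> V) : Prop :=
  forall x y : V, ip (T x) y = ip x (Ts y).

Definition opnorm (T : V -> V) : R :=
  sup [set hnorm (T x) | x in [set x | hnorm x <= 1]].

Definition numrad (T : V -> V) : R :=
  sup [set Normc.normc (ip (T x) x) | x in [set x | hnorm x = 1]].

(* Dragomir's norm Omega(T) = sup { ||zeta T + eta T^*|| : |zeta|^2+|eta|^2 <= 1 } *)
Definition dragomir (T Ts : V -> V) : R :=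
  sup [set opnorm (fun x => ze.1 *: T x + ze.2 *: Ts x) |
        ze in [set ze : R[i] * R[i] | Normc.normc ze.1 ^+ 2 + Normc.normc ze.2 ^+ 2 <= 1]].
End Hilbert.

(* Main.v *)
Require Import Defs.
From HB Require Import structures.
From mathcomp Require Import all_boot all_order all_algebra.
From mathcomp Require Import complex.
From mathcomp Require Import boolp classical_sets reals.
From mathcomp Require Import ring lra.
Import Order.TTheory GRing.Theory Num.Theory.
Local Open Scope ring_scope.
Local Open Scope classical_set_scope.
Local Open Scope complex_scope.
Set Implicit Arguments. Unset Strict Implicit. Unset Printing Implicit Defensive.

Section Aux.
Variable R : realType.
Implicit Types z : R[i].

Lemma mulcJ z : z * conjc z = (Normc.normc z ^+ 2)%:C.
Proof.
case: z => a b /=; rewrite sqr_sqrtr ?addr_ge0 ?sqr_ge0 //.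
by apply/eqP; rewrite eq_complex /= ; apply/andP; split; apply/eqP; ring.
Qed.

Lemma Re_le_normc z : complex.Re z <= Normc.normc z.
Proof.
case: z => a b /=.
apply: (le_trans (ler_norm a)).
rewrite -sqrtr_sqr. apply: ler_wsqrtr. by rewrite lerDl sqr_ge0.
Qed.

Lemma my_normcJ z : Normc.normc (conjc z) = Normc.normc z.
Proof. by case: z => a b /=; rewrite sqrrN. Qed.

Lemma normcR (k : R) : Normc.normc (k%:C) = `|k|.
Proof. by rewrite /= expr0n /= addr0 sqrtr_sqr. Qed.

Lemma ReJ z : complex.Re (conjc z) = complex.Re z. Proof. by case: z. Qed.
Lemma ReD z1 z2 : complex.Re (z1 + z2) = complex.Re z1 + complex.Re z2. Proof. by case: z1; case: z2. Qed.
Lemma normc_ge0 z : 0 <= Normc.normc z. Proof. by case: z => a b /=; rewrite sqrtr_ge0. Qed.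
Lemma normcMM z1 z2 : Normc.normc (z1 * z2) = Normc.normc z1 * Normc.normc z2.
Proof. exact: Normc.normcM. Qed.
Lemma realcM (x y : R) : (x * y)%:C = x%:C * y%:C :> R[i].
Proof. by apply/eqP; rewrite eq_complex /=; apply/andP; split; apply/eqP; ring. Qed.
Lemma realcD (x y : R) : (x + y)%:C = x%:C + y%:C :> R[i].
Proof. by apply/eqP; rewrite eq_complex /=; apply/andP; split; apply/eqP; ring. Qed.
End Aux.

Section IP.
Variable R : realType.
Variable V : lmodType R[i].
Variable ip : V -> V -> R[i].
Hypothesis H : is_hilbert ip.
Local Notation hn := (hnorm ip).
Local Notation nc := (@Normc.normc R).

Lemma ipDl x y z : ip (x + y) z = ip x z + ip y z.
Proof. by rewrite -{1}(scale1r x) (ip_linl H) mul1r. Qed.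

Lemma ip0l z : ip 0 z = 0.
Proof.
have h := ipDl 0 0 z; rewrite addr0 in h.
by apply: (addrI (ip 0 z)); rewrite addr0 -h.
Qed.

Lemma ipZl a x z : ip (a *: x) z = a * ip x z.
Proof. by rewrite -(addr0 (a *: x)) (ip_linl H) ip0l addr0. Qed.

Lemma ipNl x z : ip (- x) z = - ip x z.
Proof. by rewrite -scaleN1r ipZl mulN1r. Qed.

Lemma ipBl x y z : ip (x - y) z = ip x z - ip y z.
Proof. by rewrite ipDl ipNl. Qed.

Lemma ipDr x y z : ip z (x + y) = ip z x + ip z y.
Proof. by rewrite (ip_conj H) ipDl rmorphD /= -!(ip_conj H). Qed.

Lemma ipZr a x z : ip z (a *: x) = conjc a * ip z x.
Proof. by rewrite (ip_conj H) ipZl rmorphM /= -!(ip_conj H). Qed.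

Lemma ipNr x z : ip z (- x) = - ip z x.
Proof. by rewrite (ip_conj H) ipNl rmorphN /= -!(ip_conj H). Qed.

Lemma ip0r z : ip z 0 = 0.
Proof. by rewrite (ip_conj H) ip0l rmorph0. Qed.

Lemma hn_ge0 x : 0 <= hn x. Proof. exact: sqrtr_ge0. Qed.

Lemma ipxx x : ip x x = (hn x ^+ 2)%:C.
Proof.
have h := ip_ge0 H x.
rewrite /hnorm sqr_sqrtr; last by move: h; rewrite lecE /= => /andP[].
move: h; rewrite lecE /=; case: (ip x x) => a b /= /andP[/eqP -> _].
by rewrite complexr0.
Qed.

Lemma hn_eq0 x : hn x = 0 -> x = 0.
Proof. by move=> h; apply: (ip_eq0 H); rewrite ipxx h expr0n. Qed.

Lemma hn0 : hn 0 = 0.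
Proof. by rewrite /hnorm ip0l /= sqrtr0. Qed.

Lemma ReipJ x y : complex.Re (ip y x) = complex.Re (ip x y).
Proof. by rewrite (ip_conj H) ReJ. Qed.

Lemma hn_comb a b u v :
  hn (a *: u + b *: v) ^+ 2 =
  nc a ^+ 2 * hn u ^+ 2 + nc b ^+ 2 * hn v ^+ 2 + 2 * complex.Re (a * conjc b * ip u v).
Proof.
have -> : hn (a *: u + b *: v) ^+ 2 = complex.Re (ip (a *: u + b *: v) (a *: u + b *: v)).
  by rewrite ipxx.
rewrite !ipDl !ipDr !ipZl !ipZr !ipxx.
rewrite [ip v u](ip_conj H).
move: (ip u v) (hn u) (hn v) => w p q.
case: a => a1 a2; case: b => b1 b2; case: w => w1 w2 /=.
rewrite !sqr_sqrtr ?addr_ge0 ?sqr_ge0 //.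
ring.
Qed.


Lemma Re_aux (k : R) (b : R[i]) : complex.Re (k%:C * conjc (- b) * b) = - (k * nc b ^+ 2).
Proof. case: b => b1 b2 /=; rewrite sqr_sqrtr ?addr_ge0 ?sqr_ge0 //; ring. Qed.

Lemma normcN' (b : R[i]) : nc (- b) = nc b.
Proof. by case: b => b1 b2 /=; rewrite !sqrrN. Qed.

Lemma CS u x : nc (ip u x) <= hn u * hn x.
Proof.
have [x0|xn0] := eqVneq (hn x) 0.
  by rewrite (hn_eq0 x0) ip0r Normc.normc0 hn0 mulr0.
have p0 : 0 < hn x by rewrite lt_def xn0 hn_ge0.
set p := hn x in p0 xn0 *.
set b := ip u x.
have h := hn_comb (p ^+ 2)%:C (- b) u x.
rewrite Re_aux normcN' normcR ger0_norm ?sqr_ge0 // in h.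
have h0 := sqr_ge0 (hn ((p ^+ 2)%:C *: u + - b *: x)).
rewrite h in h0.
have hb := normc_ge0 b.
have hu := hn_ge0 u.
have h1 : nc b ^+ 2 <= (hn u * p) ^+ 2.
  rewrite -(@ler_pM2r _ (p ^+ 2)) ?exprn_gt0 //.
  rewrite -/p in h0; nra.
by rewrite -(@ler_pXn2r _ 2) ?nnegrE ?mulr_ge0 // ltW.
Qed.

Lemma hn_scale (c : R[i]) x : hn (c *: x) = nc c * hn x.
Proof.
have h := hn_comb c 0 x x.
rewrite scale0r addr0 Normc.normc0 rmorph0 mulr0 mul0r expr0n /= mul0r addr0 in h.
rewrite mulr0 addr0 /= in h.
rewrite -[hn (c *: x)]ger0_norm ?hn_ge0 // -sqrtr_sqr h -exprMn sqrtr_sqr ger0_norm //.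
by rewrite mulr_ge0 ?normc_ge0 ?hn_ge0.
Qed.

Lemma hn_tri u v : hn (u + v) <= hn u + hn v.
Proof.
have h := hn_comb 1 1 u v.
rewrite !scale1r Normc.normc1 conjc1 !mul1r expr1n !mul1r in h.
have h1 := Re_le_normc (ip u v).
have h2 := CS u v.
have hu := hn_ge0 u; have hv := hn_ge0 v; have huv := hn_ge0 (u + v).
rewrite -(@ler_pXn2r _ 2) ?nnegrE ?addr_ge0 // h.
nra.
Qed.

End IP.

Lemma my_sup_le (R : realType) (E : set R) c : 0 <= c -> (forall y, E y -> y <= c) -> sup E <= c.
Proof.
move=> c0 ub; have [ne|e] := pselect (E !=set0); first by apply: ge_sup.
have -> : E = set0 by apply/seteqP; split=> y // Ey; apply: e; exists y.
by rewrite sup0.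
Qed.

Lemma my_le_sup (R : realType) (E : set R) y M : E y -> (forall z, E z -> z <= M) -> y <= sup E.
Proof. by move=> Ey ub; apply: ub_le_sup => //; exists M. Qed.

Lemma my_sup_ge0 (R : realType) (E : set R) : (forall y, E y -> 0 <= y) -> 0 <= sup E.
Proof.
move=> h; have [hs|nhs] := pselect (has_sup E); last by rewrite sup_out.
case: (hs) => [[y Ey] ub]; apply: (le_trans (h y Ey)).
by apply: ub_le_sup.
Qed.


Section Op.
Variable R : realType.
Variable V : lmodType R[i].
Variable ip : V -> V -> R[i].
Hypothesis H : is_hilbert ip.
Variables T Ts : V -> V.
Hypothesis HT : is_bounded_op ip T.
Hypothesis HA : is_adjoint ip T Ts.
Local Notation hn := (hnorm ip).
Local Notation nc := (@Normc.normc R).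
Local Notation t := (opnorm ip T).

Lemma T0 : T 0 = 0.
Proof.
have h := (HT.1 1 0 0); rewrite !scale1r addr0 in h.
by apply: (addrI (T 0)); rewrite addr0 -h.
Qed.

Lemma TZ c x : T (c *: x) = c *: T x.
Proof. by have h := (HT.1 c x 0); rewrite addr0 T0 addr0 in h. Qed.

Lemma T_M : exists M, 0 <= M /\ forall x, hn (T x) <= M * hn x.
Proof.
case: HT.2 => M hM; exists (Num.max M 0); split; first by rewrite le_max lexx orbT.
move=> x; apply: (le_trans (hM x)); apply: ler_wpM2r; first exact: hn_ge0.
by rewrite le_max lexx.
Qed.

Lemma t_ub x : hn x <= 1 -> hn (T x) <= t.
Proof.
case: T_M => M [M0 hM] hx; apply: (my_le_sup (M:=M)); first by exists x.
move=> z [y hy <-]; apply: (le_trans (hM y)).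
by rewrite -[leRHS]mulr1 ler_wpM2l.
Qed.

Lemma t_ge0 : 0 <= t.
Proof. by apply: my_sup_ge0 => y [x _ <-]; apply: hn_ge0. Qed.

Lemma t_bound x : hn (T x) <= t * hn x.
Proof.
have [x0|xn0] := eqVneq (hn x) 0.
  by rewrite (hn_eq0 H x0) T0 (hn0 H) mulr0.
have p0 : 0 < hn x by rewrite lt_def xn0 hn_ge0.
set c := ((hn x)^-1)%:C.
have hc : nc c = (hn x)^-1 by rewrite normcR ger0_norm // invr_ge0 ltW.
have h1 : hn (c *: x) <= 1 by rewrite (hn_scale H) hc mulVf.
have := t_ub h1; rewrite TZ (hn_scale H) hc.
by rewrite [_^-1 * _]mulrC ler_pdivrMr.
Qed.

Lemma Ts_bound y : hn (Ts y) <= t * hn y.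
Proof.
have e : hn (Ts y) ^+ 2 = complex.Re (ip (T (Ts y)) y) by rewrite HA (ipxx H).
have h1 := Re_le_normc (ip (T (Ts y)) y).
have h2 := CS H (T (Ts y)) y.
have h3 := t_bound (Ts y).
have q0 := hn_ge0 ip (Ts y); have y0 := hn_ge0 ip y; have := t_ge0 => t0.
have h4 : hn (Ts y) ^+ 2 <= t * hn (Ts y) * hn y.
  rewrite e; apply: (le_trans h1); apply: (le_trans h2).
  by apply: ler_wpM2r.
have [qz|qp] := eqVneq (hn (Ts y)) 0; first by rewrite qz mulr_ge0.
rewrite -(@ler_pM2r _ (hn (Ts y))); last by rewrite lt_def qp q0.
by move: h4; rewrite expr2 mulrAC.
Qed.

Local Notation w2 := (numrad ip (fun x => T (T x))).
Local Notation A := (fun x => T (Ts x) + Ts (T x)).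

Lemma w2_ub x : hn x = 1 -> nc (ip (T (T x)) x) <= t ^+ 2.
Proof.
move=> hx; apply: (le_trans (CS H _ _)); rewrite hx mulr1.
apply: (le_trans (t_bound _)); rewrite expr2 ler_wpM2l ?t_ge0 //.
by apply: (le_trans (t_bound _)); rewrite hx mulr1.
Qed.

Lemma w2_ge0 : 0 <= w2.
Proof. by apply: my_sup_ge0 => y [x _ <-]; apply: normc_ge0. Qed.

Lemma w2_bound x : nc (ip (T (T x)) x) <= w2 * hn x ^+ 2.
Proof.
have [x0|xn0] := eqVneq (hn x) 0.
  rewrite (hn_eq0 H x0) (ip0r H) Normc.normc0.
  by rewrite mulr_ge0 ?w2_ge0 ?sqr_ge0.
have p0 : 0 < hn x by rewrite lt_def xn0 hn_ge0.
set c := ((hn x)^-1)%:C.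
have hc : nc c = (hn x)^-1 by rewrite normcR ger0_norm // invr_ge0 ltW.
have h1 : hn (c *: x) = 1 by rewrite (hn_scale H) hc mulVf.
have h2 : nc (ip (T (T (c *: x))) (c *: x)) <= w2.
  apply: (my_le_sup (M := t ^+ 2)); first by exists (c *: x).
  by move=> z [y hy <-]; apply: w2_ub.
rewrite !TZ (ipZl H) (ipZr H) !Normc.normcM my_normcJ hc in h2.
rewrite -ler_pdivrMr ?exprn_gt0 //.
by move: h2; rewrite mulrA -expr2 mulrC exprVn.
Qed.

Lemma A_ub z : hn z <= 1 -> hn (A z) <= 2 * t ^+ 2.
Proof.
move=> hz; apply: (le_trans (hn_tri H _ _)).
have t0 := t_ge0.
have e1 : hn (T (Ts z)) <= t ^+ 2.
  apply: (le_trans (t_bound _)); rewrite expr2 ler_wpM2l //.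
  by apply: (le_trans (Ts_bound _)); rewrite -[leRHS]mulr1 ler_wpM2l.
have e2 : hn (Ts (T z)) <= t ^+ 2.
  apply: (le_trans (Ts_bound _)); rewrite expr2 ler_wpM2l //.
  by apply: (le_trans (t_bound _)); rewrite -[leRHS]mulr1 ler_wpM2l.
lra.
Qed.

Lemma S_bound a b x : nc a ^+ 2 + nc b ^+ 2 <= 1 -> hn x <= 1 ->
  (hn (a *: T x + b *: Ts x) <= Num.sqrt (opnorm ip A)) /\ (hn (a *: T x + b *: Ts x) <= Num.sqrt (t ^+ 2 + w2)).
Proof.
move=> hab hx.
have e := hn_comb H a b (T x) (Ts x).
set w := ip (T x) (Ts x) in e.
have hw : complex.Re (a * conjc b * w) <= nc a * nc b * nc w.
  by apply: (le_trans (Re_le_normc _)); rewrite !Normc.normcM my_normcJ.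
have a0 := normc_ge0 a; have b0 := normc_ge0 b; have w0 := normc_ge0 w.
have P0 := hn_ge0 ip (T x); have Q0 := hn_ge0 ip (Ts x).
have x0 := hn_ge0 ip x.
have S0 := hn_ge0 ip (a *: T x + b *: Ts x).
have t0 := t_ge0.
split; rewrite -[hn _]ger0_norm // -sqrtr_sqr; apply: ler_wsqrtr.
- have cs : nc w <= hn (T x) * hn (Ts x) by apply: CS.
  have hPQ : hn (T x) ^+ 2 + hn (Ts x) ^+ 2 <= opnorm ip A.
    have -> : hn (T x) ^+ 2 + hn (Ts x) ^+ 2 = complex.Re (ip (A x) x).
      rewrite (ipDl H) ReD HA (ipxx H) -(ReipJ H) -HA (ipxx H) /=; ring.
    apply: (le_trans (Re_le_normc _)); apply: (le_trans (CS H _ _)).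
    have hA : hn (A x) <= opnorm ip A.
      apply: (my_le_sup (M := 2 * t ^+ 2)); first by exists x.
      by move=> z [y hy <-]; apply: A_ub.
    have A0 := hn_ge0 ip (A x).
    nra.
  rewrite e.
  have k1 : nc a * nc b * nc w <= nc a * nc b * (hn (T x) * hn (Ts x)).
    by rewrite ler_wpM2l ?mulr_ge0.
  have m1 := sqr_ge0 (nc a * hn (Ts x) - nc b * hn (T x)).
  have m2 : (nc a ^+ 2 + nc b ^+ 2) * (hn (T x) ^+ 2 + hn (Ts x) ^+ 2) <=
            hn (T x) ^+ 2 + hn (Ts x) ^+ 2.
    by rewrite -[leRHS]mul1r ler_wpM2r // addr_ge0 ?sqr_ge0.
  nra.
- have ew : w = ip (T (T x)) x by rewrite HA.
  have k0 : nc w <= w2 by rewrite ew; apply: (le_trans (w2_bound _)); 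
     rewrite -[leRHS]mulr1 ler_wpM2l ?w2_ge0 // expr_le1.
  have k1 : nc a * nc b * nc w <= nc a * nc b * w2 by rewrite ler_wpM2l ?mulr_ge0.
  have hP : hn (T x) <= t by apply: t_ub.
  have hQ : hn (Ts x) <= t.
    by apply: (le_trans (Ts_bound _)); rewrite -[leRHS]mulr1 ler_wpM2l.
  have w0' := w2_ge0.
  have n1 : hn (T x) ^+ 2 <= t ^+ 2 by rewrite (ler_pXn2r (n:=2)) ?nnegrE.
  have n2 : hn (Ts x) ^+ 2 <= t ^+ 2 by rewrite (ler_pXn2r (n:=2)) ?nnegrE.
  have n3 : nc a ^+ 2 * hn (T x) ^+ 2 <= nc a ^+ 2 * t ^+ 2 by rewrite ler_wpM2l ?sqr_ge0.
  have n4 : nc b ^+ 2 * hn (Ts x) ^+ 2 <= nc b ^+ 2 * t ^+ 2 by rewrite ler_wpM2l ?sqr_ge0.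
  have m1 := sqr_ge0 (nc a - nc b).
  have n5 : 2 * (nc a * nc b) <= 1 by nra.
  have n6 : 2 * (nc a * nc b) * w2 <= w2 by rewrite -[leRHS]mul1r ler_wpM2r.
  have n7 : (nc a ^+ 2 + nc b ^+ 2) * t ^+ 2 <= t ^+ 2
    by rewrite -[leRHS]mul1r ler_wpM2r ?sqr_ge0.
  rewrite e.
  nra.
Qed.

Local Notation Om := (dragomir ip T Ts).

Lemma Sop_bound a b : nc a ^+ 2 + nc b ^+ 2 <= 1 ->
  opnorm ip (fun x => a *: T x + b *: Ts x) <=
    Num.min (Num.sqrt (opnorm ip A)) (Num.sqrt (t ^+ 2 + w2)).
Proof.
move=> hab; apply: my_sup_le; first by rewrite le_min !sqrtr_ge0.
move=> y [x hx <-]; have [h1 h2] := S_bound hab hx.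
by rewrite le_min h1 h2.
Qed.

Lemma Sop_ge0 (S : V -> V) : 0 <= opnorm ip S.
Proof. by apply: my_sup_ge0 => y [x _ <-]; apply: hn_ge0. Qed.

Lemma Om_ub : Om <= Num.min (Num.sqrt (opnorm ip A)) (Num.sqrt (t ^+ 2 + w2)).
Proof.
apply: my_sup_le; first by rewrite le_min !sqrtr_ge0.
by move=> y [[a b] hab <-]; apply: Sop_bound.
Qed.

Lemma S_le_Om a b : nc a ^+ 2 + nc b ^+ 2 <= 1 ->
  opnorm ip (fun x => a *: T x + b *: Ts x) <= Om.
Proof.
move=> hab.
apply: (my_le_sup (M := Num.min (Num.sqrt (opnorm ip A)) (Num.sqrt (t ^+ 2 + w2)))).
  by exists (a, b).
by move=> y [[a' b'] hab' <-]; apply: Sop_bound.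
Qed.

Lemma Om_ge0 : 0 <= Om.
Proof. by apply: my_sup_ge0 => y [[a b] _ <-]; apply: Sop_ge0. Qed.

Lemma w_le : numrad ip T <= Num.sqrt 2 / 2 * Om.
Proof.
set s := Num.sqrt 2.
have s0 : 0 < s by rewrite sqrtr_gt0 ltr0n.
have s2 : s * s = 2 by rewrite -expr2 sqr_sqrtr ?ler0n.
have Om0 := Om_ge0.
apply: my_sup_le; first by apply: mulr_ge0 => //; apply: divr_ge0 => //; apply: ltW.
move=> y [x hx <-].
set u := ip (T x) x.
have [u0|un0] := eqVneq u 0.
  by rewrite u0 Normc.normc0; apply: mulr_ge0 => //; apply: divr_ge0 => //; apply: ltW.
set r := nc u.
have r0 : 0 < r.
  rewrite lt_def normc_ge0 andbT; by apply: contra un0 => /eqP/Normc.eq0_normc ->.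
set k := (s * r)^-1.
have k0 : 0 < k by rewrite invr_gt0 mulr_gt0.
set a := k%:C * conjc u.
set b := k%:C * u.
have hab : nc a ^+ 2 + nc b ^+ 2 <= 1.
  rewrite /a /b !Normc.normcM my_normcJ normcR (ger0_norm (ltW k0)) -/r.
  have -> : (k * r) ^+ 2 + (k * r) ^+ 2 = 1.
    have kr : k * r = s^-1 by rewrite /k invfM -mulrA mulVf ?mulr1 // gt_eqF.
    have s2' : s ^+ 2 = 2 by rewrite expr2.
    by rewrite kr exprVn s2'; field.
  by [].
have hS := S_le_Om hab.
set S := (fun x => a *: T x + b *: Ts x) in hS.
have e : ip (S x) x = (2 * k * r ^+ 2)%:C.
  rewrite /S (ipDl H) !(ipZl H).
  have -> : ip (Ts x) x = conjc u by rewrite (ip_conj H) -HA.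
  rewrite /a /b -/u -!mulrA [conjc u * u]mulrC mulcJ -/r -!realcM -realcD.
  congr (_%:C); ring.
have h1 : 2 * k * r ^+ 2 <= Om.
  have -> : 2 * k * r ^+ 2 = complex.Re (ip (S x) x) by rewrite e.
  apply: (le_trans (Re_le_normc _)); apply: (le_trans (CS H _ _)).
  rewrite hx mulr1; apply: le_trans hS.
  apply: (my_le_sup (M := Num.min (Num.sqrt (opnorm ip A)) (Num.sqrt (t ^+ 2 + w2)))).
    by exists x => //; rewrite /= hx.
  move=> z [y' hy' <-].
  by have [h1 h2] := S_bound hab hy'; rewrite le_min h1 h2.
have e2 : 2 * k * r ^+ 2 = s * r.
  rewrite /k -s2; field.
  by rewrite !gt_eqF.
rewrite e2 in h1.
nra.
Qed.

End Op.

Local Close Scope complex_scope.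
Local Close Scope classical_set_scope.

Theorem theorem3p4 (R : realType) (V : lmodType R[i]) (ip : V -> V -> R[i])
  (T Ts : V -> V) :
  is_hilbert ip -> is_bounded_op ip T -> is_adjoint ip T Ts ->
  numrad ip T <= Num.sqrt 2 / 2 * dragomir ip T Ts /\
  Num.sqrt 2 / 2 * dragomir ip T Ts <=
    Num.sqrt 2 / 2 *
      Num.min (Num.sqrt (opnorm ip (fun x => T (Ts x) + Ts (T x))))
              (Num.sqrt (opnorm ip T ^+ 2 + numrad ip (fun x => T (T x)))).
Proof.
move=> H HT HA; split; first exact: (w_le H HT HA).
apply: ler_wpM2l; last exact: (Om_ub H HT HA).
by apply: divr_ge0 => //; apply: sqrtr_ge0.
Qed.
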